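(* Let $G$ be a connected graph and let $v,w$ be vertices of $G$. Suppose there is a constant $c$ such that $|B_w(n+1)| < c\cdot |B_w(n)|$ for all $n\in\mathbb{N}$. If $G$ has 2-distinguishing density zero at $v$, then $G$ has 2-distinguishing density zero.
   Context: All graphs are simple (no loops or multiple edges) with vertex set $V$; $d$ is the graph distance. $B_x(r)=\{y\in V: d(x,y)\le r\}$ and $S_x(r)=\{y\in V: d(x,y)=r\}$. A 2-coloring $l:V\to\{\text{blue},\text{red}\}$ is preserved by an automorphism $g$ if $l(g(x))=l(x)$ for all $x\in V$; it is 2-distinguishing if the only automorphism of $G$ preserving it is the identity. Its color classes are $V_{\text{blue}}$ and $V_{\text{red}}$. For $W\subseteq V$ and $x\in V$, the density of $W$ at $x$ is $\delta_x(W):=\lim_{n\to\infty}\frac{|B_x(n)\cap W|}{|B_x(n)|}$ if the limit exists (with the conventions that a finite cardinal divided by an infinite cardinal is $0$ and a quotient of two infinite cardinals is undefined). If $\delta_x(W)$ exists for all $x\in V$, set $\delta(W):=\sup_{x\in V}\delta_x(W)$. For a 2-coloring $l$, $\delta_x(l):=\min\{\delta_x(V_{\text{blue}}),\delta_x(V_{\text{red}})\}$ and $\delta(l):=\min\{\delta(V_{\text{blue}}),\delta(V_{\text{red}})\}$. $G$ has 2-distinguishing density zero at $x$ if there is a 2-distinguishing coloring $l$ with $\delta_x(l)=0$; $G$ has 2-distinguishing density zero if there is a 2-distinguishing coloring $l$ with $\delta(l)=0$. *)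

(* Defs.v *)
From Stdlib Require Import Reals List.
Import ListNotations.
Open Scope R_scope.

Section Graphs.
Context {V : Type}.

Definition simple_graph (adj : V -> V -> Prop) : Prop :=
  (forall x y, adj x y -> adj y x) /\ (forall x, ~ adj x x).

Inductive walk (adj : V -> V -> Prop) : V -> V -> nat -> Prop :=
| walk_nil : forall x, walk adj x x 0
| walk_cons : forall x y z n, adj x y -> walk adj y z n -> walk adj x z (S n).

Definition connected (adj : V -> V -> Prop) : Prop :=
  forall x y, exists n, walk adj x y n.

Definition ball (adj : V -> V -> Prop) (x : V) (r : nat) (y : V) : Prop :=
  exists m, (m <= r)%nat /\ walk adj x y m.

Definition card_is (P : V -> Prop) (k : nat) : Prop :=
  exists l : list V, NoDup l /\ length l = k /\ forall y, In y l <-> P y.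

Definition finite_set (P : V -> Prop) : Prop := exists k, card_is P k.

(* The n-th term |B_x(n) ∩ W| / |B_x(n)|, with conventions:
   finite/finite = usual quotient, finite/infinite = 0,
   infinite/infinite = undefined (no r satisfies the relation). *)
Definition ratio_at (adj : V -> V -> Prop) (x : V) (W : V -> Prop) (n : nat) (r : R) : Prop :=
  (exists a b, card_is (fun y => ball adj x n y /\ W y) a /\
               card_is (ball adj x n) b /\ r = INR a / INR b)
  \/ (finite_set (fun y => ball adj x n y /\ W y) /\ ~ finite_set (ball adj x n) /\ r = 0).

Definition density_at (adj : V -> V -> Prop) (x : V) (W : V -> Prop) (d : R) : Prop :=
  exists u : nat -> R, (forall n, ratio_at adj x W n (u n)) /\ Un_cv u d.

Definition density (adj : V -> V -> Prop) (W : V -> Prop) (s : R) : Prop :=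
  (forall x, exists d, density_at adj x W d) /\
  is_lub (fun r => exists x, density_at adj x W r) s.

Definition automorphism (adj : V -> V -> Prop) (g : V -> V) : Prop :=
  (forall x y, g x = g y -> x = y) /\ (forall y, exists x, g x = y) /\
  (forall x y, adj x y <-> adj (g x) (g y)).

Definition preserves (l : V -> bool) (g : V -> V) : Prop :=
  forall x, l (g x) = l x.

Definition distinguishing2 (adj : V -> V -> Prop) (l : V -> bool) : Prop :=
  forall g, automorphism adj g -> preserves l g -> forall x, g x = x.

Definition V_blue (l : V -> bool) (x : V) : Prop := l x = true.
Definition V_red (l : V -> bool) (x : V) : Prop := l x = false.

Definition dist_density_zero_at (adj : V -> V -> Prop) (x : V) : Prop :=
  exists l, distinguishing2 adj l /\
    exists db dr, density_at adj x (V_blue l) db /\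
                  density_at adj x (V_red l) dr /\ Rmin db dr = 0.

Definition dist_density_zero (adj : V -> V -> Prop) : Prop :=
  exists l, distinguishing2 adj l /\
    exists sb sr, density adj (V_blue l) sb /\
                  density adj (V_red l) sr /\ Rmin sb sr = 0.

End Graphs.

(* Main.v *)
Require Import Defs.
From Stdlib Require Import Reals.
From Stdlib Require Import Lra Lia List ClassicalEpsilon.
Open Scope R_scope.

Lemma key (A B A' B' Bw K: R): 0<=A -> A<=A' -> 0<Bw -> Bw<=B -> 0<B' -> B'<=K*Bw -> A/B <= K*(A'/B').
Proof.
  intros. apply Rle_trans with (A'/Bw).
  - apply Rle_trans with (A'/B); unfold Rdiv.
    + apply Rmult_le_compat_r; [left; apply Rinv_0_lt_compat; lra| lra].
    + apply Rmult_le_compat_l; [lra|]. apply Rinv_le_contravar; lra.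
  - assert (HK : B'/Bw <= K).
    { apply Rmult_le_reg_r with Bw; [lra|]. unfold Rdiv. rewrite Rmult_assoc, Rinv_l; lra. }
    replace (A'/Bw) with ((A'/B')*(B'/Bw)) by (field; lra).
    rewrite (Rmult_comm K). apply Rmult_le_compat_l; [|lra].
    unfold Rdiv; apply Rmult_le_pos; [lra| left; apply Rinv_0_lt_compat; lra].
Qed.

Lemma filter_split_len {A} (f : A -> bool) (l : list A) :
  (length (filter f l) + length (filter (fun x => negb (f x)) l))%nat = length l.
Proof. induction l; simpl; [reflexivity|]. destruct (f a); simpl; lia. Qed.

Section H.
Context {V : Type}.
Implicit Types (adj : V -> V -> Prop).

Lemma walk_app adj x y z m k : walk adj x y m -> walk adj y z k -> walk adj x z (m + k).
Proof. induction 1; intros; simpl; [assumption| econstructor; eauto]. Qed.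

Lemma ball_shift adj x y d n z : walk adj x y d -> ball adj y n z -> ball adj x (n + d) z.
Proof. intros Hw [m [Hm Hw2]]. exists (d + m)%nat. split; [lia|]. now apply walk_app with y. Qed.

Lemma ball_self adj x n : ball adj x n x.
Proof. exists 0%nat; split; [lia| constructor]. Qed.

Lemma card_unique (P : V -> Prop) a b : card_is P a -> card_is P b -> a = b.
Proof.
  intros [la [Na [La Ha]]] [lb [Nb [Lb Hb]]]. subst.
  apply Nat.le_antisymm; apply NoDup_incl_length; auto; intros y Hy;
  [apply Hb, Ha | apply Ha, Hb]; auto.
Qed.

Lemma card_mono (P Q : V -> Prop) a b : card_is P a -> card_is Q b -> (forall y, Q y -> P y) -> (b <= a)%nat.
Proof.
  intros [la [Na [La Ha]]] [lb [Nb [Lb Hb]]] HQP. subst.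
  apply NoDup_incl_length; auto. intros y Hy. apply Ha, HQP, Hb; auto.
Qed.

Lemma card_sub (P Q : V -> Prop) k : card_is P k -> (forall y, Q y -> P y) -> exists k', card_is Q k'.
Proof.
  intros [la [Na [La Ha]]] HQP.
  exists (length (filter (fun y => if excluded_middle_informative (Q y) then true else false) la)).
  exists (filter (fun y => if excluded_middle_informative (Q y) then true else false) la).
  split; [apply NoDup_filter; auto| split; [reflexivity|]].
  intros y; rewrite filter_In; destruct (excluded_middle_informative (Q y)); split; intros HH.
  - tauto.
  - split; [apply Ha, HQP|]; auto.
  - destruct HH; discriminate.
  - contradiction.
Qed.

Lemma card_pos (P : V -> Prop) k x : card_is P k -> P x -> (1 <= k)%nat.
Proof. intros [l [N [L HH]]] Hx. subst. apply HH in Hx. destruct l; [destruct Hx| simpl; lia]. Qed.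

Definition cardf (P : V -> Prop) : nat := epsilon (inhabits 0%nat) (fun k => card_is P k).

Lemma cardf_spec P : (exists k, card_is P k) -> card_is P (cardf P).
Proof. intros. unfold cardf. apply epsilon_spec. auto. Qed.

Lemma cardf_eq P k : card_is P k -> cardf P = k.
Proof. intros HH. apply card_unique with P; [apply cardf_spec; eauto|exact HH]. Qed.

Lemma card_split (l : V -> bool) (b : bool) (P : V -> Prop) k : card_is P k ->
  (cardf (fun y => P y /\ l y = b) + cardf (fun y => P y /\ l y = negb b))%nat = k.
Proof.
  intros [ls [N [L HH]]].
  assert (H1 : card_is (fun y => P y /\ l y = b) (length (filter (fun y => Bool.eqb (l y) b) ls))).
  { exists (filter (fun y => Bool.eqb (l y) b) ls); split; [apply NoDup_filter; auto| split; [reflexivity|]].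
    intros y; rewrite filter_In, HH. destruct (l y), b; simpl; intuition congruence. }
  assert (H2 : card_is (fun y => P y /\ l y = negb b) (length (filter (fun y => negb (Bool.eqb (l y) b)) ls))).
  { exists (filter (fun y => negb (Bool.eqb (l y) b)) ls); split; [apply NoDup_filter; auto| split; [reflexivity|]].
    intros y; rewrite filter_In, HH. destruct (l y), b; simpl; intuition congruence. }
  rewrite (cardf_eq _ _ H1), (cardf_eq _ _ H2). subst; apply filter_split_len.
Qed.

Definition rf adj x (W : V -> Prop) n : R :=
  INR (cardf (fun y => ball adj x n y /\ W y)) / INR (cardf (ball adj x n)).

Lemma ratio_rf adj x W n : (exists k, card_is (ball adj x n) k) -> ratio_at adj x W n (rf adj x W n).
Proof.
  intros [k Hk]. left. exists (cardf (fun y => ball adj x n y /\ W y)), (cardf (ball adj x n)).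
  split; [|split; [|reflexivity]].
  - apply cardf_spec. apply card_sub with (ball adj x n) k; [exact Hk| tauto].
  - apply cardf_spec; eauto.
Qed.

Lemma ratio_eq adj x W n r : (exists k, card_is (ball adj x n) k) -> ratio_at adj x W n r -> r = rf adj x W n.
Proof.
  intros Hf [[a [b [Ha [Hb ->]]]] | [_ [Hn _]]].
  - unfold rf. rewrite (cardf_eq _ _ Ha), (cardf_eq _ _ Hb). reflexivity.
  - exfalso; apply Hn; exact Hf.
Qed.

Lemma density_rf adj x W d : (forall n, exists k, card_is (ball adj x n) k) ->
  density_at adj x W d -> Un_cv (rf adj x W) d.
Proof.
  intros Hf [u [Hu Hc]] eps Heps. destruct (Hc eps Heps) as [N HN]. exists N. intros n Hn.
  rewrite <- (ratio_eq adj x W n (u n)); auto.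
Qed.

Lemma rf_density adj x W d : (forall n, exists k, card_is (ball adj x n) k) ->
  Un_cv (rf adj x W) d -> density_at adj x W d.
Proof. intros Hf Hc. exists (rf adj x W). split; auto. intros n; apply ratio_rf; auto. Qed.

Lemma density_const adj W d0 : (forall x n, exists k, card_is (ball adj x n) k) ->
  (forall x, Un_cv (rf adj x W) d0) -> forall v : V, density adj W d0.
Proof.
  intros Hf Hc v. split.
  - intros x; exists d0; apply rf_density; auto.
  - split.
    + intros r [x Hx]. apply density_rf in Hx; auto.
      rewrite (UL_sequence _ _ _ Hx (Hc x)). lra.
    + intros b Hb. apply Hb. exists v. apply rf_density; auto.
Qed.

End H.

Theorem lemma2p1 (V : Type) (adj : V -> V -> Prop) (v w : V) :
  simple_graph adj ->
  connected adj ->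
  (exists c : R, forall n : nat, exists a b : nat,
      card_is (ball adj w n) a /\ card_is (ball adj w (S n)) b /\
      INR b < c * INR a) ->
  dist_density_zero_at adj v ->
  dist_density_zero adj.
Proof.
  intros Hsimp Hconn [c Hc] [l [Hdist [db [dr [Hb [Hr Hmin]]]]]].
  assert (Hfw : forall n, exists k, card_is (ball adj w n) k).
  { intros n. destruct (Hc n) as [a [b [Ha _]]]. eauto. }
  assert (Hf : forall x n, exists k, card_is (ball adj x n) k).
  { intros x n. destruct (Hconn w x) as [g Hg]. destruct (Hfw (n + g)%nat) as [k Hk].
    apply card_sub with (ball adj w (n+g)) k; auto. intros y Hy. eapply ball_shift; eauto. }
  assert (Hpos : forall x n, 0 < INR (cardf (ball adj x n))).
  { intros x n. apply lt_0_INR. destruct (Hf x n) as [k Hk].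
    rewrite (cardf_eq _ _ Hk). pose proof (card_pos _ _ x Hk (ball_self adj x n)). lia. }
  assert (Hstep : forall n, INR (cardf (ball adj w (S n))) <= c * INR (cardf (ball adj w n))).
  { intros n. destruct (Hc n) as [a [b [Ha [Hb' Hlt]]]].
    rewrite (cardf_eq _ _ Ha), (cardf_eq _ _ Hb'). lra. }
  assert (Hc0 : 0 <= c).
  { pose proof (Hstep 0%nat). pose proof (Hpos w 0%nat). pose proof (Hpos w 1%nat).
    destruct (Rle_or_lt 0 c); auto. nra. }
  assert (Hgrow : forall k j, INR (cardf (ball adj w (k + j))) <= c ^ j * INR (cardf (ball adj w k))).
  { intros k j. induction j.
    - rewrite Nat.add_0_r. simpl. lra.
    - rewrite Nat.add_succ_r. simpl. eapply Rle_trans; [apply Hstep|].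
      rewrite Rmult_assoc. apply Rmult_le_compat_l; auto. }
  assert (Hcore : forall b : bool, Un_cv (rf adj v (fun y => l y = b)) 0 ->
             forall x, Un_cv (rf adj x (fun y => l y = b)) 0).
  { intros b Hv x.
    destruct (Hconn v x) as [D2 Hvx]. destruct (Hconn w v) as [f Hwv].
    destruct (Hconn x w) as [p Hxw].
    set (W := fun y => l y = b).
    set (K := c ^ (D2 + f + p)).
    assert (HK : 0 < K).
    { unfold K. apply pow_lt. destruct Hc0 as [|<-]; auto.
      pose proof (Hstep 0%nat). pose proof (Hpos w 0%nat). pose proof (Hpos w 1%nat). lra. }
    assert (Hbound : forall n, (n >= p)%nat -> rf adj x W n <= K * rf adj v W (n + D2)).
    { intros n Hn. set (k := (n - p)%nat).
      assert (Hnk : n = (k + p)%nat) by (unfold k; lia).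
      assert (CA : forall z m, card_is (fun y => ball adj z m y /\ W y) (cardf (fun y => ball adj z m y /\ W y))).
      { intros z m. apply cardf_spec. destruct (Hf z m) as [kk Hkk].
        apply card_sub with (ball adj z m) kk; auto. tauto. }
      assert (CB : forall z m, card_is (ball adj z m) (cardf (ball adj z m))).
      { intros z m. apply cardf_spec. auto. }
      unfold rf. apply key with (Bw := INR (cardf (ball adj w k))).
      - apply pos_INR.
      - apply le_INR. eapply card_mono; [apply CA| apply CA|].
        intros y [Hy Wy]. split; auto. eapply ball_shift; eauto.
      - apply (Hpos w k).
      - apply le_INR. eapply card_mono; [apply CB| apply CB|].
        intros y Hy. rewrite Hnk. eapply ball_shift; eauto.
      - apply Hpos.
      - eapply Rle_trans; [apply le_INR; eapply card_mono; [apply (CB w (n + D2 + f)%nat)| apply CB|]|].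
        + intros y Hy. eapply ball_shift; eauto.
        + replace (n + D2 + f)%nat with (k + (D2 + f + p))%nat by lia. apply Hgrow. }
    intros eps Heps.
    destruct (Hv (eps / K)) as [N HN]. { apply Rdiv_lt_0_compat; auto. }
    exists (Nat.max N p). intros n Hn.
    specialize (HN (n + D2)%nat ltac:(lia)). specialize (Hbound n ltac:(lia)).
    unfold R_dist in *. rewrite Rminus_0_r in *.
    assert (H0 : 0 <= rf adj x W n).
    { unfold rf. unfold Rdiv. apply Rmult_le_pos; [apply pos_INR| left; apply Rinv_0_lt_compat; apply Hpos]. }
    rewrite Rabs_right by lra.
    assert (rf adj v W (n + D2) < eps / K) by (eapply Rle_lt_trans; [apply Rle_abs| exact HN]).
    apply Rle_lt_trans with (K * rf adj v W (n + D2)); auto.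
    apply Rmult_lt_reg_l with (/K); [apply Rinv_0_lt_compat; auto|].
    rewrite <- Rmult_assoc, Rinv_l by lra. unfold Rdiv in *. lra. }
  assert (Hcompl : forall (b : bool) x, Un_cv (rf adj x (fun y => l y = b)) 0 ->
             Un_cv (rf adj x (fun y => l y = negb b)) 1).
  { intros b x Hx eps Heps. destruct (Hx eps Heps) as [N HN]. exists N. intros n Hn.
    specialize (HN n Hn).
    assert (Heq : rf adj x (fun y => l y = negb b) n = 1 - rf adj x (fun y => l y = b) n).
    { unfold rf. destruct (Hf x n) as [k Hk].
      pose proof (card_split l b _ _ Hk) as Hs. pose proof (Hpos x n) as Hp.
      rewrite (cardf_eq _ _ Hk) in *. rewrite <- Hs in *. rewrite plus_INR in *.
      field. lra. }
    unfold R_dist in *. rewrite Heq. replace (1 - rf adj x (fun y => l y = b) n - 1)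
      with (- (rf adj x (fun y => l y = b) n - 0)) by ring. rewrite Rabs_Ropp. auto. }
  exists l. split; auto.
  apply density_rf in Hb; auto. apply density_rf in Hr; auto.
  assert (Hz : db = 0 \/ dr = 0).
  { unfold Rmin in Hmin. destruct (Rle_dec db dr); auto. }
  destruct Hz as [-> | ->].
  - exists 0, 1. split; [|split].
    + apply (density_const adj (fun y => l y = true) 0 Hf); auto.
    + apply (density_const adj (fun y => l y = negb true) 1 Hf); auto.
    + unfold Rmin; destruct (Rle_dec 0 1); lra.
  - exists 1, 0. split; [|split].
    + apply (density_const adj (fun y => l y = negb false) 1 Hf); auto.
    + apply (density_const adj (fun y => l y = false) 0 Hf); auto.
    + unfold Rmin; destruct (Rle_dec 1 0); lra.
Qed.
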